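(* (i) Let $d\ge 2$ and let $\rho_{AB}$ be any state on $\mathbb{C}^d\otimes\mathbb{C}^2$ (Alice holds the qudit, Bob the qubit). Let $\rho_A=\operatorname{Tr}_B[\rho_{AB}]$, $\mu_1\in[0,\tfrac{1}{\sqrt3}]$, and $\tau^1_{AB}=\mu_1\rho_{AB}+(1-\mu_1)\rho_A\otimes\tfrac{\mathbb{I}_2}{2}$. If $\tau^1_{AB}$ is entangled, then $\rho_{AB}$ is EPR steerable from Bob to Alice. (ii) Let $d\ge 2$ and let $\rho_{AB}$ be any state on $\mathbb{C}^2\otimes\mathbb{C}^d$ (Alice holds the qubit, Bob the qudit). Let $\rho_B=\operatorname{Tr}_A[\rho_{AB}]$, $\mu_2\in[0,\tfrac{1}{\sqrt3}]$, and $\tau^2_{AB}=\mu_2\rho_{AB}+(1-\mu_2)\tfrac{\mathbb{I}_2}{2}\otimes\rho_B$. If $\tau^2_{AB}$ is entangled, then $\rho_{AB}$ is EPR steerable from Alice to Bob.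
   Context: $\mathbb{I}_2$ is the $2\times2$ identity. Measurements are arbitrary POVMs $A=\{M^A_a\}$ on Alice's system and $B=\{M^B_b\}$ on Bob's system, with $P(a,b|A,B,\rho_{AB})=\operatorname{Tr}[(M^A_a\otimes M^B_b)\rho_{AB}]$. $\rho_{AB}$ is NOT EPR steerable from Bob to Alice iff there exist a distribution $P(\lambda)$, quantum states $\rho^A_\lambda$ on Alice's system and arbitrary distributions $P(b|B,\lambda)$ with $P(a,b|A,B,\rho_{AB})=\sum_\lambda P(\lambda)\operatorname{Tr}[\rho^A_\lambda M^A_a]P(b|B,\lambda)$ for all $A,B,a,b$; otherwise it is steerable from Bob to Alice. $\rho_{AB}$ is NOT EPR steerable from Alice to Bob iff there exist $P(\lambda)$, arbitrary distributions $P(a|A,\lambda)$ and quantum states $\rho^B_\lambda$ on Bob's system with $P(a,b|A,B,\rho_{AB})=\sum_\lambda P(\lambda)P(a|A,\lambda)\operatorname{Tr}[\rho^B_\lambda M^B_b]$ for all $A,B,a,b$; otherwise it is steerable from Alice to Bob. A bipartite state is separable if it is a convex combination of product states $\rho^A_\lambda\otimes\rho^B_\lambda$, and entangled otherwise. *)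

(* Defs.v *)
(* Complex numbers are modelled by an arbitrary
   numClosedFieldType C. *)
From HB Require Import structures.
From mathcomp Require Import all_boot all_order all_algebra.
Set Implicit Arguments. Unset Strict Implicit. Unset Printing Implicit Defensive.
Import Order.TTheory GRing.Theory Num.Theory.
Local Open Scope ring_scope.

Section Quantum.
Variable C : numClosedFieldType.

Definition adjmx (m n : nat) (A : 'M[C]_(m, n)) : 'M[C]_(n, m) :=
  (map_mx Num.conj A)^T.

Definition hermitian (n : nat) (A : 'M[C]_n) : Prop := adjmx A = A.

Definition psd (n : nat) (A : 'M[C]_n) : Prop :=
  hermitian A /\ forall v : 'cV[C]_n, 0 <= (adjmx v *m A *m v) 0 0.

Definition is_state (n : nat) (rho : 'M[C]_n) : Prop :=
  psd rho /\ \tr rho = 1.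

Definition is_POVM (n k : nat) (M : 'I_k -> 'M[C]_n) : Prop :=
  (forall a, psd (M a)) /\ \sum_(a < k) M a = 1%:M.

(* index decomposition of C^m (x) C^n, compatible with mathcomp's mxvec_index *)
Definition tens_idx (m n : nat) (p : 'I_(m * n)) : 'I_m * 'I_n :=
  enum_val (cast_ord (esym (mxvec_cast m n)) p).

Definition kron (m n : nat) (A : 'M[C]_m) (B : 'M[C]_n) : 'M[C]_(m * n) :=
  \matrix_(p, q) (A (tens_idx p).1 (tens_idx q).1 * B (tens_idx p).2 (tens_idx q).2).

Definition ptraceA (m n : nat) (rho : 'M[C]_(m * n)) : 'M[C]_n :=
  \matrix_(k, l) \sum_(i < m) rho (mxvec_index i k) (mxvec_index i l).
Definition ptraceB (m n : nat) (rho : 'M[C]_(m * n)) : 'M[C]_m :=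
  \matrix_(i, j) \sum_(k < n) rho (mxvec_index i k) (mxvec_index j k).

Definition prob (dA dB : nat) (rho : 'M[C]_(dA * dB))
  (MAa : 'M[C]_dA) (MBb : 'M[C]_dB) : C :=
  \tr (kron MAa MBb *m rho).

Definition is_distribution (n : nat) (p : 'I_n -> C) : Prop :=
  (forall l, 0 <= p l) /\ \sum_(l < n) p l = 1.

Definition is_response (d n : nat)
  (r : forall k : nat, ('I_k -> 'M[C]_d) -> 'I_n -> 'I_k -> C) : Prop :=
  forall (k : nat) (M : 'I_k -> 'M[C]_d), is_POVM M ->
    forall l : 'I_n, is_distribution (r k M l).

(* NOT EPR steerable from Bob to Alice: LHS model with quantum states on Alice *)
Definition unsteerable_BA (dA dB : nat) (rho : 'M[C]_(dA * dB)) : Prop :=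
  exists (n : nat) (p : 'I_n -> C) (sA : 'I_n -> 'M[C]_dA)
         (rB : forall k : nat, ('I_k -> 'M[C]_dB) -> 'I_n -> 'I_k -> C),
    [/\ is_distribution p, (forall l, is_state (sA l)), is_response rB &
      forall (kA kB : nat) (MA : 'I_kA -> 'M[C]_dA) (MB : 'I_kB -> 'M[C]_dB),
        is_POVM MA -> is_POVM MB ->
        forall (a : 'I_kA) (b : 'I_kB),
          prob rho (MA a) (MB b) =
          \sum_(l < n) p l * \tr (sA l *m MA a) * rB kB MB l b].

(* NOT EPR steerable from Alice to Bob: LHS model with quantum states on Bob *)
Definition unsteerable_AB (dA dB : nat) (rho : 'M[C]_(dA * dB)) : Prop :=
  exists (n : nat) (p : 'I_n -> C)
         (rA : forall k : nat, ('I_k -> 'M[C]_dA) -> 'I_n -> 'I_k -> C)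
         (sB : 'I_n -> 'M[C]_dB),
    [/\ is_distribution p, is_response rA, (forall l, is_state (sB l)) &
      forall (kA kB : nat) (MA : 'I_kA -> 'M[C]_dA) (MB : 'I_kB -> 'M[C]_dB),
        is_POVM MA -> is_POVM MB ->
        forall (a : 'I_kA) (b : 'I_kB),
          prob rho (MA a) (MB b) =
          \sum_(l < n) p l * rA kA MA l a * \tr (sB l *m MB b)].

Definition steerable_BA (dA dB : nat) (rho : 'M[C]_(dA * dB)) : Prop :=
  ~ unsteerable_BA rho.
Definition steerable_AB (dA dB : nat) (rho : 'M[C]_(dA * dB)) : Prop :=
  ~ unsteerable_AB rho.

Definition separable (dA dB : nat) (rho : 'M[C]_(dA * dB)) : Prop :=
  exists (n : nat) (p : 'I_n -> C) (sA : 'I_n -> 'M[C]_dA) (sB : 'I_n -> 'M[C]_dB),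
    [/\ is_distribution p, (forall l, is_state (sA l)), (forall l, is_state (sB l)) &
      rho = \sum_(l < n) p l *: kron (sA l) (sB l)].

Definition entangled (dA dB : nat) (rho : 'M[C]_(dA * dB)) : Prop :=
  ~ separable rho.

End Quantum.

(* Main.v *)
Require Import Defs.
From HB Require Import structures.
From mathcomp Require Import all_boot all_order all_algebra.
From mathcomp Require Import ring.
Import Order.TTheory GRing.Theory Num.Theory.
Local Open Scope ring_scope.
Set Implicit Arguments. Unset Strict Implicit. Unset Printing Implicit Defensive.

Section S.
Variable C : numClosedFieldType.

Lemma tens_idxK m n (i : 'I_m) (j : 'I_n) : tens_idx (mxvec_index i j) = (i, j).
Proof. by rewrite /tens_idx /mxvec_index cast_ordK enum_rankK. Qed.

Lemma sum_tens m n (f : 'I_(m * n) -> C) :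
  \sum_(p < m * n) f p = \sum_(i < m) \sum_(k < n) f (mxvec_index i k).
Proof.
rewrite pair_bigA /=.
rewrite (reindex (fun u : 'I_m * 'I_n => mxvec_index u.1 u.2)) //=.
exists (@tens_idx m n) => x _; first by case: x => i k; rewrite tens_idxK.
by case/mxvec_indexP: x => i k; rewrite tens_idxK.
Qed.

Lemma kronE m n (A : 'M[C]_m) (B : 'M[C]_n) i k j l :
  kron A B (mxvec_index i k) (mxvec_index j l) = A i j * B k l.
Proof. by rewrite /kron mxE !tens_idxK. Qed.

Lemma kron_mul m n (A X : 'M[C]_m) (B Y : 'M[C]_n) :
  kron A B *m kron X Y = kron (A *m X) (B *m Y).
Proof.
apply/matrixP => p q.
case/mxvec_indexP: p => i k; case/mxvec_indexP: q => j l.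
rewrite mxE kronE !mxE sum_tens big_distrlr /=.
apply: eq_bigr => a _; apply: eq_bigr => b _.
by rewrite !kronE; ring.
Qed.

Lemma kron_tr m n (A : 'M[C]_m) (B : 'M[C]_n) : \tr (kron A B) = \tr A * \tr B.
Proof.
rewrite /mxtrace sum_tens big_distrlr /=.
by apply: eq_bigr => i _; apply: eq_bigr => k _; rewrite kronE.
Qed.

Lemma prob_kron m n (X : 'M[C]_m) (Y : 'M[C]_n) E F :
  prob (kron X Y) E F = \tr (X *m E) * \tr (Y *m F).
Proof. by rewrite /prob kron_mul kron_tr !(mxtrace_mulC E) (mxtrace_mulC F). Qed.

Lemma kronDl m n a (A A' : 'M[C]_m) (B : 'M[C]_n) :
  kron (a *: A + A') B = a *: kron A B + kron A' B.
Proof. by apply/matrixP => p q; rewrite !mxE; ring. Qed.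

Lemma kronDr m n a (A : 'M[C]_m) (B B' : 'M[C]_n) :
  kron A (a *: B + B') = a *: kron A B + kron A B'.
Proof. by apply/matrixP => p q; rewrite !mxE; ring. Qed.

Lemma probD m n a (X Y : 'M[C]_(m * n)) E F :
  prob (a *: X + Y) E F = a * prob X E F + prob Y E F.
Proof. by rewrite /prob mulmxDr -scalemxAr mxtraceD mxtraceZ. Qed.

Lemma prob_sum m n k (X : 'I_k -> 'M[C]_(m * n)) E F :
  prob (\sum_(l < k) X l) E F = \sum_(l < k) prob (X l) E F.
Proof. by rewrite /prob mulmx_sumr raddf_sum. Qed.

Lemma probZ m n a (X : 'M[C]_(m * n)) E F : prob (a *: X) E F = a * prob X E F.
Proof. by rewrite /prob -scalemxAr mxtraceZ. Qed.

Lemma probDl m n a (X : 'M[C]_(m * n)) E E' F :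
  prob X (a *: E + E') F = a * prob X E F + prob X E' F.
Proof. by rewrite /prob kronDl mulmxDl -scalemxAl mxtraceD mxtraceZ. Qed.

Lemma probDr m n a (X : 'M[C]_(m * n)) E F F' :
  prob X E (a *: F + F') = a * prob X E F + prob X E F'.
Proof. by rewrite /prob kronDr mulmxDl -scalemxAl mxtraceD mxtraceZ. Qed.

Lemma mxvec_index_eq m n (i i' : 'I_m) (k k' : 'I_n) :
  (mxvec_index i k == mxvec_index i' k') = (i == i') && (k == k').
Proof.
apply/eqP/andP => [h|[/eqP -> /eqP ->]] //.
by have := congr1 (@tens_idx m n) h; rewrite !tens_idxK => -[-> ->].
Qed.

Lemma kron_delta m n (i j : 'I_m) (k l : 'I_n) :
  kron (delta_mx i j) (delta_mx k l) = delta_mx (mxvec_index i k) (mxvec_index j l) :> 'M[C]_(m*n).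
Proof.
apply/matrixP => p q.
case/mxvec_indexP: p => i' k'; case/mxvec_indexP: q => j' l'.
rewrite kronE !mxE -natrM; congr (_%:R).
rewrite !mxvec_index_eq.
by case: (i' == i); case: (j' == j); case: (k' == k); case: (l' == l).
Qed.

Lemma tr_delta_mul m (a b : 'I_m) (X : 'M[C]_m) : \tr (delta_mx a b *m X) = X b a.
Proof.
rewrite /mxtrace (bigD1 a) //= big1 => [|p ne]; last first.
  rewrite mxE big1 // => q _; rewrite mxE (negbTE ne) mul0r //.
rewrite addr0 mxE (bigD1 b) //= big1 => [|q ne]; last by rewrite mxE (negbTE ne) andbF mul0r.
by rewrite mxE !eqxx mul1r addr0.
Qed.

Lemma prob_delta m n (X : 'M[C]_(m * n)) i j k l :
  prob X (delta_mx i j) (delta_mx k l) = X (mxvec_index j l) (mxvec_index i k).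
Proof. by rewrite /prob kron_delta tr_delta_mul. Qed.

Lemma probA1 m n (X : 'M[C]_(m * n)) E :
  prob X E 1%:M = \tr (ptraceB X *m E).
Proof.
rewrite mxtrace_mulC /prob /mxtrace sum_tens.
apply: eq_bigr => i _; rewrite mxE.
under eq_bigr do rewrite mxE sum_tens.
rewrite exchange_big /=; apply: eq_bigr => j _.
rewrite mxE big_distrr /=; apply: eq_bigr => k _.
rewrite (bigD1 k) //= big1 => [|l ne]; last by rewrite kronE !mxE eq_sym (negbTE ne) mulr0 mul0r.
by rewrite kronE !mxE eqxx mulr1 addr0.
Qed.

Lemma prob1B m n (X : 'M[C]_(m * n)) F :
  prob X 1%:M F = \tr (ptraceA X *m F).
Proof.
rewrite mxtrace_mulC /prob /mxtrace sum_tens exchange_big /=.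
apply: eq_bigr => k _; rewrite mxE.
under eq_bigr do rewrite mxE sum_tens.
under [RHS]eq_bigr do rewrite mxE big_distrr.
rewrite [RHS]exchange_big /=.
apply: eq_bigr => i _.
rewrite (bigD1 i) //= [X in _ + X]big1 => [|j ne]; last first.
  by rewrite big1 // => l _; rewrite kronE !mxE eq_sym (negbTE ne) !mul0r.
rewrite addr0; apply: eq_bigr => l _.
by rewrite kronE !mxE eqxx mul1r.
Qed.

End S.

Section S2.
Variable C : numClosedFieldType.

Lemma adjmxE m n (A : 'M[C]_(m, n)) i j : adjmx A i j = (A j i)^*.
Proof. by rewrite /adjmx !mxE. Qed.

Lemma qform n (A : 'M[C]_n) (v : 'cV[C]_n) :
  (adjmx v *m A *m v) 0 0 = \sum_x \sum_y (v x 0)^* * A x y * v y 0.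
Proof.
rewrite mxE; under eq_bigr do rewrite mxE big_distrl /=.
rewrite exchange_big /=; apply: eq_bigr => x _; apply: eq_bigr => y _.
by rewrite adjmxE.
Qed.

Lemma psdP n (A : 'M[C]_n) :
  (forall x y, A x y = (A y x)^*) ->
  (forall v : 'I_n -> C, 0 <= \sum_x \sum_y (v x)^* * A x y * v y) -> psd A.
Proof.
move=> hh hq; split.
  by apply/matrixP => x y; rewrite adjmxE -hh.
by move=> v; rewrite qform; apply: (hq (fun x => v x 0)).
Qed.

Definition pmat n (c : C) (w : 'I_n -> C) : 'M[C]_n :=
  \matrix_(x, y) (c * (w x * (w y)^*)).

Lemma psd_pmat n (c : C) (w : 'I_n -> C) : 0 <= c -> psd (pmat c w).
Proof.
move=> c0; apply: psdP => [x y|v]; first rewrite !mxE !rmorphM /=. rewrite conjCK (geC0_conj c0). ring.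
have -> : \sum_x \sum_y (v x)^* * pmat c w x y * v y =
   c * ((\sum_y (w y)^* * v y)^* * (\sum_y (w y)^* * v y)).
  rewrite rmorph_sum big_distrl big_distrr /=; apply: eq_bigr => x _.
  rewrite big_distrr big_distrr /=; apply: eq_bigr => y _.
  by rewrite mxE !rmorphM /= conjCK; ring.
by apply: mulr_ge0 => //; rewrite mulrC mul_conjC_ge0.
Qed.

Lemma psd_diag n (D : 'I_n -> C) : (forall x, 0 <= D x) ->
  psd (\matrix_(x, y) (D x * (x == y)%:R)).
Proof.
move=> D0; apply: psdP => [x y|v].
  rewrite !mxE rmorphM /= conjC_nat geC0_conj // eq_sym.
  by case: eqVneq => [->|]; rewrite ?mulr0 ?mulr1.
apply: sumr_ge0 => x _; rewrite (bigD1 x) //= big1 => [|y ne].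
  by rewrite addr0 mxE eqxx mulr1 mulrC mulrA mulr_ge0 // mul_conjC_ge0.
by rewrite mxE eq_sym (negbTE ne) mulr0 mulr0 mul0r.
Qed.


Lemma ord2E (x : 'I_2) : x = 0 \/ x = 1.
Proof. by case: x => -[|[|//]] p; [left|right]; apply: val_inj. Qed.

Lemma sum2 (f : 'I_2 -> C) : \sum_(x < 2) f x = f 0 + f 1.
Proof. by rewrite big_ord_recl big_ord1; congr (_ + f _); apply: val_inj. Qed.

Lemma psd2 (B : 'M[C]_2) :
  (B 0 0)^* = B 0 0 -> (B 1 1)^* = B 1 1 -> B 1 0 = (B 0 1)^* ->
  B 0 0 + B 1 1 = 1 -> 0 <= B 0 0 * B 1 1 - B 0 1 * (B 0 1)^* -> psd B.
Proof.
move=> h0 h1 h10 hs hD; apply: psdP => [x y|v].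
  have h01 : B 0 1 = (B 1 0)^* by rewrite h10 conjCK.
  by case: (ord2E x) => ->; case: (ord2E y) => ->.
rewrite !sum2.
move: hs hD h0 h1; rewrite h10.
move: (B 0 0) (B 1 1) (B 0 1) (v 0) (v 1) => x y z v0 v1 hs hD h0 h1.
have -> : (v0^* * x * v0 + v0^* * z * v1 + (v1^* * z^* * v0 + v1^* * y * v1))
   = (x + y) * (v0^* * x * v0 + v0^* * z * v1 + (v1^* * z^* * v0 + v1^* * y * v1)).
  by rewrite hs mul1r.
have -> : (x + y) * (v0^* * x * v0 + v0^* * z * v1 + (v1^* * z^* * v0 + v1^* * y * v1)) =
   (x * v0 + z * v1) * (x * v0 + z * v1)^* + (x * y - z * z^*) * (v1 * v1^*)
            + ((y * v1 + z^* * v0) * (y * v1 + z^* * v0)^* + (x * y - z * z^*) * (v0 * v0^*)).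
  rewrite !rmorphD !rmorphM /= h0 h1 conjCK; ring.
apply: addr_ge0; apply: addr_ge0; rewrite ?mul_conjC_ge0 //; apply: mulr_ge0 => //; exact: mul_conjC_ge0.
Qed.

End S2.

Section S3.
Variable C : numClosedFieldType.

Definition Ppair n (i j : 'I_n) (om s : C) : 'M[C]_n :=
  pmat (2^-1) (fun x => (x == i)%:R + s * om * (x == j)%:R).

Lemma two_neq0 : (2 : C) != 0. Proof. by rewrite pnatr_eq0. Qed.

Lemma PpairE n (i j : 'I_n) om s x y : (s = 1 \/ s = -1) ->
  Ppair i j om s x y = 2^-1 * (((x == i)%:R + s * om * (x == j)%:R) *
                               ((y == i)%:R + s * om^* * (y == j)%:R)).
Proof.
move=> hs; rewrite /Ppair /pmat mxE !rmorphD !rmorphM /= !conjC_nat.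
by case: hs => ->; rewrite ?conjC1 ?conjCN1.
Qed.

Lemma delta_pair n (i j : 'I_n) : i != j ->
  delta_mx i j = 2^-1 *: Ppair i j 1 1 + ((- 2^-1) *: Ppair i j 1 (-1) +
    (('i / 2) *: Ppair i j 'i 1 + ((- ('i / 2)) *: Ppair i j 'i (-1) + 0))) :> 'M[C]_n.
Proof.
move=> ij; apply/matrixP => x y.
rewrite !mxE addr0 !rmorphD !rmorphM /= !conjC_nat ?conjC1 ?conjCN1 ?conjCi.
rewrite -mulnb natrM.
move: ((x == i)%:R : C) ((x == j)%:R : C) ((y == i)%:R : C) ((y == j)%:R : C) => Ix Jx Iy Jy.
transitivity (Ix * Jy + 2^-1 * (Jx * Iy - Ix * Jy) * ('i * 'i + 1)).
  by rewrite mulCii addNr mulr0 addr0.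
by field.
Qed.

Lemma delta_pair' n (i j : 'I_n) : i != j ->
  delta_mx j i = 2^-1 *: Ppair i j 1 1 + ((- 2^-1) *: Ppair i j 1 (-1) +
    ((- ('i / 2)) *: Ppair i j 'i 1 + (('i / 2) *: Ppair i j 'i (-1) + 0))) :> 'M[C]_n.
Proof.
move=> ij; apply/matrixP => x y.
rewrite !mxE addr0 !rmorphD !rmorphM /= !conjC_nat ?conjC1 ?conjCN1 ?conjCi.
rewrite -mulnb natrM.
move: ((x == i)%:R : C) ((x == j)%:R : C) ((y == i)%:R : C) ((y == j)%:R : C) => Ix Jx Iy Jy.
transitivity (Jx * Iy + 2^-1 * (Ix * Jy - Jx * Iy) * ('i * 'i + 1)).
  by rewrite mulCii addNr mulr0 addr0.
by field.
Qed.

Lemma span_lemma n (L : 'M[C]_n -> C) :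
  (forall a A B, L (a *: A + B) = a * L A + L B) ->
  (forall a, L (delta_mx a a) = 0) ->
  (forall (i j : 'I_n) om s, (i < j)%N -> (om = 1 \/ om = 'i) -> (s = 1 \/ s = -1) ->
      L (Ppair i j om s) = 0) ->
  forall i j, L (delta_mx i j) = 0.
Proof.
move=> hL hd hp i j.
have L0 : L 0 = 0.
  have := hL 1 0 0; rewrite scale1r addr0 mul1r => h.
  by apply: (@addrI _ (L 0)); rewrite addr0 -h.
have [ij|ji|/val_inj ->] := ltngtP i j; last exact: hd.
  rewrite delta_pair ?neq_ltn ?ij // !hL L0 !hp //; try by [left|right].
  by rewrite !mulr0 !addr0.
rewrite delta_pair' ?neq_ltn ?ji // !hL L0 !hp //; try by [left|right].
by rewrite !mulr0 !addr0.
Qed.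

End S3.

Section S4.
Variable C : numClosedFieldType.

Definition basisM n : 'I_n -> 'M[C]_n := fun a => delta_mx a a.

Definition Rest n (i j : 'I_n) : 'M[C]_n :=
  \matrix_(x, y) (((x != i) && (x != j))%:R * (x == y)%:R).

Definition pairM n (i j : 'I_n) (om : C) : 'I_3 -> 'M[C]_n := fun a =>
  if (val a == 0)%N then Ppair i j om 1 else if (val a == 1)%N then Ppair i j om (-1)
  else Rest i j.

Definition pauli2 (om : C) : 'I_2 -> 'M[C]_2 := fun b =>
  Ppair 0 1 om (if (val b == 0)%N then 1 else -1).

Lemma psd_delta n (a : 'I_n) : psd (delta_mx a a : 'M[C]_n).
Proof.
have -> : delta_mx a a = \matrix_(x, y) ((x == a)%:R * (x == y)%:R) :> 'M[C]_n.
  apply/matrixP => x y; rewrite !mxE -natrM mulnb.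
  case: (eqVneq x a) => [->|xa]; last by [].
  by case: (eqVneq y a) => [_|ya]; rewrite ?eqxx // eq_sym (negbTE ya).
by apply: psd_diag => x; rewrite ler0n.
Qed.

Lemma psd_Ppair n (i j : 'I_n) (om s : C) : psd (Ppair i j om s).
Proof. by apply: psd_pmat; rewrite invr_ge0 ler0n. Qed.

Lemma povm_basis n : is_POVM (@basisM n).
Proof.
split => [a|]; first exact: psd_delta.
apply/matrixP => x y; rewrite summxE !mxE.
rewrite (bigD1 x) //= big1 => [|a ne]; last by rewrite mxE eq_sym (negbTE ne).
by rewrite mxE eqxx addr0 /= eq_sym.
Qed.

Lemma Ppair_sum n (i j : 'I_n) (om : C) : om * om^* = 1 ->
  Ppair i j om 1 + Ppair i j om (-1) =
  \matrix_(x, y) ((x == i)%:R * (y == i)%:R + (x == j)%:R * (y == j)%:R).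
Proof.
move=> hom; apply/matrixP => x y.
rewrite !mxE !rmorphD !rmorphM /= !conjC_nat ?conjC1 ?conjCN1.
move: ((x == i)%:R : C) ((x == j)%:R : C) ((y == i)%:R : C) ((y == j)%:R : C) => Ix Jx Iy Jy.
transitivity (Ix * Iy + Jx * Jy * (om * om^*)); last by rewrite hom mulr1.
by field.
Qed.

Lemma om_unit (om : C) : (om = 1 \/ om = 'i) -> om * om^* = 1.
Proof. by case => ->; rewrite ?conjC1 ?mulr1 // conjCi mulrN mulCii opprK. Qed.

Lemma sum3 n (f : 'I_3 -> 'M[C]_n) : \sum_(a < 3) f a = f 0 + f 1 + f 2.
Proof.
rewrite !big_ord_recl big_ord0 addr0 addrA.
by congr (f _ + f _ + f _); apply: val_inj.
Qed.

Lemma povm_pair n (i j : 'I_n) (om : C) : i != j -> (om = 1 \/ om = 'i) -> is_POVM (pairM i j om).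
Proof.
move=> ij hom; split => [a|].
  rewrite /pairM; case: ifP => _; first exact: psd_Ppair.
  case: ifP => _; first exact: psd_Ppair.
  by apply: psd_diag => x; rewrite ler0n.
rewrite sum3 /pairM /= Ppair_sum ?om_unit //.
apply/matrixP => x y; rewrite !mxE -!natrM -!natrD; congr (_%:R).
case: (eqVneq x i) => [->|xi]; case: (eqVneq y i) => [->|yi]; rewrite ?eqxx /= ?(negbTE ij) //.
  by rewrite (negbTE xi) !muln0 mul0n.
case: (eqVneq x j) => [->|xj] /=; first by rewrite (eq_sym j); case: (y == j).
by case: (x == y).
Qed.

Lemma msum2 (f : 'I_2 -> 'M[C]_2) : \sum_(x < 2) f x = f 0 + f 1.
Proof. by rewrite big_ord_recl big_ord1; congr (_ + f _); apply: val_inj. Qed.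

Lemma povm_pauli2 (om : C) : (om = 1 \/ om = 'i) -> is_POVM (pauli2 om).
Proof.
move=> hom; split => [a|]; first exact: psd_Ppair.
rewrite msum2 /pauli2 /= Ppair_sum ?om_unit //.
apply/matrixP => x y; rewrite !mxE.
by case: (ord2E x) => ->; case: (ord2E y) => ->; rewrite /= ?mulr0 ?mul0r ?mulr1 ?addr0 ?add0r.
Qed.

End S4.

Section S5.
Variable C : numClosedFieldType.

Definition beta (mu gx gy gz : C) : 'M[C]_2 :=
  \matrix_(x, y) (if (val x == 0)%N then
                    (if (val y == 0)%N then 2^-1 * (1 + mu * gz) else 2^-1 * mu * (gx - 'i * gy))
                  else
                    (if (val y == 0)%N then 2^-1 * mu * (gx + 'i * gy) else 2^-1 * (1 - mu * gz))).

Definition pauliM (c : 'I_3) : 'I_2 -> 'M[C]_2 :=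
  if (val c == 0)%N then @basisM C 2 else if (val c == 1)%N then pauli2 1 else pauli2 'i.

Lemma pauliM_povm c : is_POVM (pauliM c).
Proof.
rewrite /pauliM; case: ifP => _; first exact: povm_basis.
case: ifP => _; apply: povm_pauli2; by [left|right].
Qed.

Lemma tr2 (A B : 'M[C]_2) : \tr (A *m B) = A 0 0 * B 0 0 + A 0 1 * B 1 0 + (A 1 0 * B 0 1 + A 1 1 * B 1 1).
Proof. by rewrite /mxtrace sum2 !mxE !sum2. Qed.

Lemma tr_beta_delta mu gx gy gz (a : 'I_2) :
  \tr (beta mu gx gy gz *m delta_mx a a) = 2^-1 * (1 + (if (val a == 0)%N then 1 else -1) * mu * gz).
Proof.
rewrite tr2 !mxE /=.
by case: (ord2E a) => -> /=; field.
Qed.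

Lemma tr_beta_pair mu gx gy gz (om s : C) : (om = 1 \/ om = 'i) -> (s = 1 \/ s = -1) ->
  \tr (beta mu gx gy gz *m Ppair 0 1 om s) = 2^-1 * (1 + s * mu * (if om == 1 then gx else gy)).
Proof.
move=> hom hs; rewrite tr2 !PpairE // !mxE /=.
have i1 : ('i == 1 :> C) = false.
  apply/negbTE/eqP => h; have := mulCii C; rewrite h mulr1 => h1.
  have := two_neq0 C; rewrite (_ : (2:C) = 1 + 1) // {2}h1 subrr eqxx //.
case: hom => ->; rewrite ?conjC1 ?conjCi ?eqxx ?i1.
  by case: hs => ->; field.
transitivity (2^-1 * (1 + s * mu * gy) - (2^-1 * s * mu * gy + 2^-1 * 2^-1 * (1 - mu * gz)) * ('i * 'i + 1)); last first.
  by rewrite mulCii addNr mulr0 subr0.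
by case: hs => ->; field.
Qed.


Definition gg (r : 'I_3 -> 'I_2 -> C) (c : 'I_3) : C := r c 0 - r c 1.

Definition betaR (mu : C) (r : 'I_3 -> 'I_2 -> C) := beta mu (gg r 1) (gg r 2) (gg r 0).

Lemma ord3E (c : 'I_3) : c = 0 \/ c = 1 \/ c = 2.
Proof.
by case: c => -[|[|[|//]]] p; [left|right;left|right;right]; apply/val_inj.
Qed.

Lemma tr_pauli mu r (c : 'I_3) (b : 'I_2) : (forall c, r c 0 + r c 1 = 1) ->
  \tr (betaR mu r *m pauliM c b) = mu * r c b + (1 - mu) / 2.
Proof.
move=> hr; rewrite /betaR /gg.
have h1 : forall c', r c' 1 = 1 - r c' 0 by move=> c'; rewrite -(hr c') addrC addKr.
case: (ord3E c) => [|[|]] ->; rewrite /pauliM /=.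
- rewrite /basisM tr_beta_delta.
  by case: (ord2E b) => -> /=; rewrite ?h1; field.
- rewrite /pauli2 tr_beta_pair ?eqxx; try by [left|left].
    by case: (ord2E b) => -> /=; rewrite ?h1; field.
  by case: (ord2E b) => -> /=; [left|right].
- rewrite /pauli2 tr_beta_pair; try by [right|right].
    have i1 : ('i == 1 :> C) = false.
      apply/negbTE/eqP => h; have := mulCii C; rewrite h mulr1 => h1'.
      have := two_neq0 C; rewrite (_ : (2:C) = 1 + 1) // {2}h1' subrr eqxx //.
    by rewrite i1; case: (ord2E b) => -> /=; rewrite ?h1; field.
  by case: (ord2E b) => -> /=; [left|right].
Qed.


Lemma half_id r : 2^-1 *: (1%:M : 'M[C]_2) = betaR 0 r.
Proof.
apply/matrixP => x y; rewrite !mxE.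
have o01 : (0 == 1 :> 'I_2) = false by [].
have o10 : (1 == 0 :> 'I_2) = false by [].
by case: (ord2E x) => ->; case: (ord2E y) => -> /=; rewrite ?eqxx ?o01 ?o10 /=; field.
Qed.

Lemma g_sq (r0 r1 : C) : 0 <= r0 -> 0 <= r1 -> r0 + r1 = 1 -> (r0 - r1) * (r0 - r1) <= 1.
Proof.
move=> h0 h1 hs; rewrite -subr_ge0.
have -> : 1 - (r0 - r1) * (r0 - r1) = 4%:R * (r0 * r1).
  transitivity ((r0 + r1) * (r0 + r1) - (r0 - r1) * (r0 - r1)); first by rewrite hs mulr1.
  ring.
by rewrite mulr_ge0 ?ler0n ?mulr_ge0.
Qed.

Lemma real_ge0 (x : C) : 0 <= x -> x^* = x.
Proof. exact: geC0_conj. Qed.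

Lemma beta_state mu gx gy gz : 0 <= mu -> mu <= (sqrtC 3)^-1 ->
  gx^* = gx -> gy^* = gy -> gz^* = gz ->
  gx * gx <= 1 -> gy * gy <= 1 -> gz * gz <= 1 -> is_state (beta mu gx gy gz).
Proof.
move=> m0 m1 hx hy hz gx1 gy1 gz1.
have muR : mu^* = mu by rewrite real_ge0.
have h2 : (2^-1 : C)^* = 2^-1 by rewrite fmorphV /= conjC_nat.
have mu2 : mu * mu <= 3%:R^-1.
  have -> : (3%:R^-1 : C) = (sqrtC 3)^-1 * (sqrtC 3)^-1 by rewrite -invfM -expr2 sqrtCK.
  by apply: ler_pM.
split; last first.
  by rewrite /mxtrace sum2 !mxE /=; field.
apply: psd2; rewrite !mxE /=.
- by rewrite !(rmorphM, rmorphD) /= h2 conjC1 muR hz.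
- by rewrite !(rmorphM, rmorphB) /= h2 conjC1 muR hz.
- by rewrite !(rmorphM, rmorphB) /= h2 muR hx hy conjCi mulNr opprK.
- by field.
have -> : 2^-1 * (1 + mu * gz) * (2^-1 * (1 - mu * gz)) -
    2^-1 * mu * (gx - 'i * gy) * (2^-1 * mu * (gx - 'i * gy))^* =
    2^-1 * 2^-1 * (1 - mu * mu * (gz * gz + gx * gx + gy * gy)).
  rewrite !(rmorphM, rmorphB) /= h2 muR hx hy conjCi.
  transitivity (2^-1 * 2^-1 * (1 - mu * mu * (gz * gz + gx * gx + gy * gy))
     + 2^-1 * 2^-1 * mu * mu * gy * gy * ('i * 'i + 1)); last first.
    by rewrite mulCii addNr mulr0 addr0.
  by field.
apply: mulr_ge0; first by rewrite mulr_ge0 // invr_ge0 ler0n.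
rewrite subr_ge0.
have S3 : gz * gz + gx * gx + gy * gy <= 3%:R.
  by rewrite (_ : 3%:R = 1 + 1 + 1 :> C) ?lerD //; ring.
have Sg : forall g : C, g^* = g -> 0 <= g * g.
  by move=> g hg; rewrite -{2}hg mul_conjC_ge0.
have S0 : 0 <= gz * gz + gx * gx + gy * gy by rewrite !addr_ge0 ?Sg.
apply: le_trans (_ : 3%:R^-1 * 3%:R <= 1); last by rewrite mulVf ?pnatr_eq0.
by apply: ler_pM => //; rewrite mulr_ge0.
Qed.

Lemma betaR_state mu r : 0 <= mu -> mu <= (sqrtC 3)^-1 ->
  (forall c b, 0 <= r c b) -> (forall c, r c 0 + r c 1 = 1) -> is_state (betaR mu r).
Proof.
move=> m0 m1 hr0 hr; apply: beta_state => //;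
  rewrite /gg ?rmorphB /= ?real_ge0 //; apply: g_sq => //.
Qed.

End S5.

Section S6.
Variable C : numClosedFieldType.

Definition povm_elem k (E : 'M[C]_k) :=
  exists K (M : 'I_K -> 'M[C]_k) a, is_POVM M /\ E = M a.
Definition pauli_elem (F : 'M[C]_2) := exists c b, F = @pauliM C c b.
Definition spans k (S : 'M[C]_k -> Prop) :=
  forall L : 'M[C]_k -> C, (forall a A B, L (a *: A + B) = a * L A + L B) ->
  (forall E, S E -> L E = 0) -> forall i j, L (delta_mx i j) = 0.

Lemma spans_povm k : spans (@povm_elem k).
Proof.
move=> L hL h0; apply: span_lemma => // [a|i j om s ij hom hs].
  by apply: h0; exists k, (@basisM C k), a; split => //; exact: povm_basis.
apply: h0; exists 3, (pairM i j om).
have ij' : i != j by rewrite neq_ltn ij.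
case: hs => ->.
  by exists 0; split => //; exact: povm_pair.
by exists 1; split => //; exact: povm_pair.
Qed.

Lemma spans_pauli : spans pauli_elem.
Proof.
move=> L hL h0; apply: span_lemma => // [a|i j om s ij hom hs].
  by apply: h0; exists 0, a.
have [-> ->] : i = 0 /\ j = 1.
  by case: (ord2E i) ij => ->; case: (ord2E j) => ->.
apply: h0; rewrite /pauli_elem /pauliM.
case: hom => ->.
  exists 1; case: hs => ->; [exists 0 | exists 1]; by [].
exists 2; case: hs => ->; [exists 0 | exists 1]; by [].
Qed.

Lemma determine m n (X : 'M[C]_(m * n)) SA SB : spans SA -> spans SB ->
  (forall E F, SA E -> SB F -> prob X E F = 0) -> X = 0.
Proof.
move=> hA hB h; apply/matrixP => p q.
case/mxvec_indexP: p => a b; case/mxvec_indexP: q => c d.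
rewrite -prob_delta mxE.
apply: (hB (fun F => prob X (delta_mx c a) F)) => [x A B|F SF]; first exact: probDr.
apply: (hA (fun E => prob X E F)) => [x A B|E SE]; first exact: probDl.
exact: h.
Qed.

End S6.

Section S7.
Variable C : numClosedFieldType.

Lemma probB m n (X Y : 'M[C]_(m * n)) E F : prob (X - Y) E F = prob X E F - prob Y E F.
Proof. by rewrite /prob mulmxBr raddfB. Qed.

Definition triv k : 'I_1 -> 'M[C]_k := fun _ => 1%:M.

Lemma povm_triv k : is_POVM (triv k).
Proof.
split => [a|]; last by rewrite big_ord1.
have -> : triv k a = \matrix_(x, y) (1 * (x == y)%:R) by apply/matrixP => x y; rewrite !mxE mul1r.
by apply: psd_diag => x; rewrite ler01.
Qed.

Lemma dist1 (q : 'I_1 -> C) : is_distribution q -> q 0 = 1.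
Proof. by case=> _; rewrite big_ord1. Qed.

Lemma dist2 (q : 'I_2 -> C) : is_distribution q -> q 0 + q 1 = 1.
Proof. by case=> _; rewrite sum2. Qed.

Lemma final_alg n (p t r : 'I_n -> C) (mu T z : C) :
  T = \sum_(l < n) p l * t l ->
  mu * (\sum_(l < n) p l * t l * r l) + (1 - mu) * (T * (0 * z + (1 - 0) / 2)) -
  \sum_(l < n) p l * (t l * (mu * r l + (1 - mu) / 2)) = 0.
Proof.
move=> ->; apply/eqP; rewrite subr_eq0; apply/eqP.
rewrite big_distrr /= big_distrl /= big_distrr /= -big_split /=.
by apply: eq_bigr => l _; field.
Qed.

Lemma part1 d (rho : 'M[C]_(d * 2)) mu : is_state rho -> 0 <= mu -> mu <= (sqrtC 3)^-1 ->
  entangled (mu *: rho + (1 - mu) *: kron (ptraceB rho) (2^-1 *: (1%:M : 'M[C]_2))) ->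
  steerable_BA rho.
Proof.
move=> hs m0 m1 hent [n [p [sA [rB [hp hsA hrB hmod]]]]].
apply: hent.
pose r := fun l (c : 'I_3) (b : 'I_2) => rB 2 (@pauliM C c) l b.
have hr0 : forall l c b, 0 <= r l c b by move=> l c b; exact: (hrB 2 _ (@pauliM_povm C c) l).1 b.
have hr1 : forall l c, r l c 0 + r l c 1 = 1 by move=> l c; exact: dist2 (hrB 2 _ (@pauliM_povm C c) l).
exists n, p, sA, (fun l => betaR mu (r l)); split => //.
  by move=> l; apply: betaR_state.
apply/eqP; rewrite -subr_eq0; apply/eqP.
apply: (determine (@spans_povm C d) (@spans_pauli C)) => E F [K [M [a [hM ->]]]] [c [b ->]].
rewrite probB probD probZ prob_kron prob_sum.
under eq_bigr do rewrite probZ prob_kron tr_pauli //.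
pose rh : 'I_3 -> 'I_2 -> C := fun _ _ => 2^-1.
have hh : forall c' : 'I_3, rh c' 0 + rh c' 1 = 1 by move=> c'; rewrite /rh; field.
rewrite (half_id rh) tr_pauli // hmod //; last exact: pauliM_povm.
apply: (@final_alg n p (fun l => \tr (sA l *m M a)) (fun l => r l c b)).
rewrite -probA1 (hmod _ _ _ (triv 2) hM (povm_triv 2) a 0).
by apply: eq_bigr => l _; rewrite (dist1 (hrB _ _ (povm_triv 2) l)) mulr1.
Qed.


Lemma final_alg2 n (p t r : 'I_n -> C) (mu T z : C) :
  T = \sum_(l < n) p l * t l ->
  mu * (\sum_(l < n) p l * r l * t l) + (1 - mu) * ((0 * z + (1 - 0) / 2) * T) -
  \sum_(l < n) p l * ((mu * r l + (1 - mu) / 2) * t l) = 0.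
Proof.
move=> ->; apply/eqP; rewrite subr_eq0; apply/eqP.
rewrite big_distrr /= big_distrr /= big_distrr /= -big_split /=.
by apply: eq_bigr => l _; field.
Qed.

Lemma part2 d (rho : 'M[C]_(2 * d)) mu : is_state rho -> 0 <= mu -> mu <= (sqrtC 3)^-1 ->
  entangled (mu *: rho + (1 - mu) *: kron (2^-1 *: (1%:M : 'M[C]_2)) (ptraceA rho)) ->
  steerable_AB rho.
Proof.
move=> hs m0 m1 hent [n [p [rA [sB [hp hrA hsB hmod]]]]].
apply: hent.
pose r := fun l (c : 'I_3) (b : 'I_2) => rA 2 (@pauliM C c) l b.
have hr0 : forall l c b, 0 <= r l c b by move=> l c b; exact: (hrA 2 _ (@pauliM_povm C c) l).1 b.
have hr1 : forall l c, r l c 0 + r l c 1 = 1 by move=> l c; exact: dist2 (hrA 2 _ (@pauliM_povm C c) l).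
exists n, p, (fun l => betaR mu (r l)), sB; split => //.
  by move=> l; apply: betaR_state.
apply/eqP; rewrite -subr_eq0; apply/eqP.
apply: (determine (@spans_pauli C) (@spans_povm C d)) => E F [c [b ->]] [K [M [a [hM ->]]]].
rewrite probB probD probZ prob_kron prob_sum.
under eq_bigr do rewrite probZ prob_kron tr_pauli //.
pose rh : 'I_3 -> 'I_2 -> C := fun _ _ => 2^-1.
have hh : forall c' : 'I_3, rh c' 0 + rh c' 1 = 1 by move=> c'; rewrite /rh; field.
rewrite (half_id rh) tr_pauli // hmod //; last exact: pauliM_povm.
apply: (@final_alg2 n p (fun l => \tr (sB l *m M a)) (fun l => r l c b)).
rewrite -prob1B (hmod _ _ (triv 2) _ (povm_triv 2) hM 0 a).
by apply: eq_bigr => l _; rewrite (dist1 (hrA _ _ (povm_triv 2) l)) mulr1.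
Qed.

End S7.

Theorem mainTheorem3 (C : numClosedFieldType) (d : nat) (hd : (2 <= d)%N) :
  (* (i): Alice holds the qudit C^d, Bob the qubit C^2 *)
  (forall (rho : 'M[C]_(d * 2)) (mu1 : C),
     is_state rho -> 0 <= mu1 -> mu1 <= (sqrtC 3)^-1 ->
     entangled (mu1 *: rho + (1 - mu1) *: kron (ptraceB rho) (2^-1 *: (1%:M : 'M[C]_2))) ->
     steerable_BA rho)
  /\
  (* (ii): Alice holds the qubit C^2, Bob the qudit C^d *)
  (forall (rho : 'M[C]_(2 * d)) (mu2 : C),
     is_state rho -> 0 <= mu2 -> mu2 <= (sqrtC 3)^-1 ->
     entangled (mu2 *: rho + (1 - mu2) *: kron (2^-1 *: (1%:M : 'M[C]_2)) (ptraceA rho)) ->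
     steerable_AB rho).
Proof.
split => rho mu; [exact: part1 | exact: part2].
Qed.
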